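(* Let $n_1,n_2\in(0,1)$ with $n_1+n_2=1$ and for $N\ge2$ let $N_1=N_1(N),N_2=N_2(N)\in\mathbb{N}$ with $N_1+N_2=N$ and $|N_1/N-n_1|=O(N^{-1})=|N_2/N-n_2|$ as $N\to\infty$. For each $k\in\mathbb{N}$ there exists $c_k>0$ such that for all $N>k$ $$\mathrm{Tr}\big|\gamma^{(k)}_{\mathrm{spin},N_1,N_2}-\gamma^{(k)}_{\mathrm{spin},\infty}\big|\le\frac{c_k}{N},$$ where $\gamma^{(k)}_{\mathrm{spin},N_1,N_2}$ is the $k$-body marginal of $|e_1^{\otimes N_1}\vee e_2^{\otimes N_2}\rangle\langle e_1^{\otimes N_1}\vee e_2^{\otimes N_2}|$ on $(\mathbb{C}^2)^{\otimes N}$ and $$\gamma^{(k)}_{\mathrm{spin},\infty}:=\sum_{j=0}^k\binom{k}{j}n_1^{k-j}n_2^{j}\,\big|e_1^{\otimes(k-j)}\vee e_2^{\otimes j}\big\rangle\big\langle e_1^{\otimes(k-j)}\vee e_2^{\otimes j}\big|.$$ The trace is taken in $(\mathbb{C}^2)^{\otimes k}$.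
   Context: $e_1=\binom10$, $e_2=\binom01$. For orthonormal $e_1,e_2$, $e_1^{\otimes a}\vee e_2^{\otimes b}$ is the unit vector $\binom{a+b}{a}^{-1/2}$ times the sum of all distinct tensor products of $a$ copies of $e_1$ and $b$ copies of $e_2$. The $k$-body marginal of a density matrix on $(\mathbb{C}^2)^{\otimes N}$ is the partial trace over $N-k$ tensor factors. *)

(* Defs.v *)
From HB Require Import structures.
From mathcomp Require Import all_boot all_order all_algebra.
From mathcomp Require Import complex.
Set Implicit Arguments. Unset Strict Implicit. Unset Printing Implicit Defensive.
Import Order.TTheory GRing.Theory Num.Theory.
Local Open Scope ring_scope.

Section Defs.
Variable R : rcfType.
Local Notation C := R[i].

(* Computational basis of (C^2)^{\otimes n}: x : 'I_n -> bool,
   false = e_1, true = e_2 in each tensor factor. *)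
Definition qubits (n : nat) := {ffun 'I_n -> bool}.

(* operators on a finite-dimensional space with orthonormal basis T,
   given by their matrix entries *)
Definition Op (T : finType) := T -> T -> C.

Definition op_mul (T : finType) (A B : Op T) : Op T :=
  fun x y => \sum_(z : T) A x z * B z y.
Definition op_adj (T : finType) (A : Op T) : Op T := fun x y => (A y x)^*.
Definition op_sub (T : finType) (A B : Op T) : Op T := fun x y => A x y - B x y.
Definition op_tr (T : finType) (A : Op T) : C := \sum_(x : T) A x x.

Definition op_psd (T : finType) (B : Op T) : Prop :=
  (forall x y, B x y = (B y x)^*) /\
  (forall v : T -> C, 0 <= \sum_(x : T) \sum_(y : T) (v x)^* * B x y * v y).

(* B = |A| = sqrt(A^* A): the (unique) positive semidefinite square root of A^* A *)
Definition is_abs (T : finType) (A B : Op T) : Prop :=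
  op_psd B /\ op_mul B B = op_mul (op_adj A) A.

Definition proj (T : finType) (v : T -> C) : Op T := fun x y => v x * (v y)^*.

(* e_1^{\otimes a} \vee e_2^{\otimes b} in (C^2)^{\otimes n} (zero unless a + b = n):
   binom(a+b,a)^{-1/2} times the sum of all basis tensors with a factors e_1
   and b factors e_2. *)
Definition symvec (n a b : nat) : qubits n -> C :=
  fun x => if (#|[set i | x i]| == b) && (a + b == n)%N
           then ((Num.sqrt ('C(a + b, a))%:R)^-1)%:C%C else 0.

Definition ext_nat (m : nat) (x : qubits m) : nat -> bool :=
  fun j => if @insub nat (fun j => j < m)%N _ j is Some j' then x j' else false.
Definition glue (k N : nat) (x : qubits k) (z : qubits (N - k)) : qubits N :=
  [ffun i : 'I_N => if (i < k)%N then ext_nat x i else ext_nat z (i - k)].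

Definition marginal (k N : nat) (G : Op (qubits N)) : Op (qubits k) :=
  fun x y => \sum_(z : qubits (N - k)) G (glue x z) (glue y z).

Definition gamma_spin (N1 N2 k : nat) : Op (qubits k) :=
  @marginal k (N1 + N2)%N (proj (@symvec (N1 + N2) N1 N2)).

Definition gamma_inf (n1 n2 : R) (k : nat) : Op (qubits k) :=
  fun x y => \sum_(j < k.+1)
     (('C(k, j))%:R * n1 ^+ (k - j) * n2 ^+ j)%:C%C * proj (@symvec k (k - j) j) x y.

End Defs.

(* Main.v *)
Require Import Defs.
From HB Require Import structures.
From mathcomp Require Import all_boot all_order all_algebra.
From mathcomp Require Import complex.
From mathcomp Require Import lra ring zify.
From Stdlib Require Import FunctionalExtensionality.
Import Order.TTheory GRing.Theory Num.Theory.
Local Open Scope ring_scope.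

Definition wt {n : nat} (x : qubits n) : nat := #|[set i | x i]|.

Lemma ext_natE n (x : qubits n) (i : 'I_n) : ext_nat x i = x i.
Proof.
rewrite /ext_nat insubT /=; first exact: ltn_ord.
move=> Hi; congr (x _); exact: val_inj.
Qed.

Lemma wt_sum n (x : qubits n) : wt x = (\sum_(0 <= i < n) ext_nat x i)%N.
Proof.
rewrite /wt -sum1_card big_mkcond /= big_mkord.
apply: eq_bigr => i _; rewrite inE ext_natE; by case: (x i).
Qed.

Lemma ext_glue k N (x : qubits k) (z : qubits (N - k)) i : (i < N)%N ->
  ext_nat (glue x z) i = if (i < k)%N then ext_nat x i else ext_nat z (i - k).
Proof.
move=> iN; rewrite {1}/ext_nat (insubT (fun j => j < N)%N iN) /= ffunE //.
Qed.

Lemma wt_glue k N (x : qubits k) (z : qubits (N - k)) :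
  (k <= N)%N -> wt (glue x z) = (wt x + wt z)%N.
Proof.
move=> kN; rewrite !wt_sum (big_cat_nat (leq0n k) kN) /=.
congr (_ + _)%N.
  rewrite !big_nat; apply: eq_bigr => i /andP [_ ik].
  by rewrite ext_glue ?ik // (leq_trans ik kN).
rewrite -{1}(add0n k) big_addn big_nat [in RHS]big_nat; apply: eq_bigr => i /andP [_ iN].
have HiN : (i + k < N)%N by lia.
rewrite ext_glue //.
have -> : (i + k < k)%N = false by rewrite ltnNge leq_addl.
by rewrite addnK.
Qed.

Lemma card_wt m t : #|[pred z : qubits m | wt z == t]| = 'C(m, t).
Proof.
rewrite -[in RHS](card_ord m) -card_draws.
pose f (z : qubits m) := [set i | z i].
have finj : injective f.
  move=> z1 z2 /setP H; apply/ffunP => i; move: (H i); rewrite !inE; done.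
rewrite -(card_imset _ finj); apply: eq_card => A.
rewrite !inE; apply/imsetP/idP.
  by move=> [z]; rewrite inE => /eqP <- ->.
move=> /eqP HA; exists [ffun i => i \in A].
  rewrite inE /wt -HA; apply/eqP; apply: eq_card => i; by rewrite inE ffunE.
by apply/setP => i; rewrite inE ffunE.
Qed.

Lemma sum_wt (V : nmodType) m t (c : V) :
  \sum_(z : qubits m) (if wt z == t then c else 0) = c *+ 'C(m, t).
Proof.
by rewrite -big_mkcond /= sumr_const -card_wt.
Qed.

Lemma wt_le k (x : qubits k) : (wt x <= k)%N.
Proof. by rewrite /wt; apply: leq_trans (max_card _) _; rewrite card_ord. Qed.

Lemma sum_split_wt (V : nmodType) k (G : qubits k -> V) :
  \sum_x G x = \sum_(j < k.+1) \sum_(x | wt x == j) G x.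
Proof.
under [RHS]eq_bigr do rewrite big_mkcond /=.
rewrite exchange_big /=; apply: eq_bigr => x _.
have Hx : (wt x < k.+1)%N by rewrite ltnS wt_le.
rewrite (bigD1 (Ordinal Hx)) //= eqxx big1 ?addr0 // => j Hj.
case: eqP => // E; case/eqP: Hj; apply: val_inj => /=; done.
Qed.

Section Ops.
Variable R : rcfType.
Local Notation C := R[i].

Definition Wop k (m : nat -> R) : Op R (qubits k) :=
  fun x y => if wt x == wt y then (m (wt x))%:C%C else 0.

Lemma conj_real (x : R) : Num.conj (x%:C)%C = (x%:C)%C.
Proof. change (conjc (x%:C)%C = (x%:C)%C). by rewrite conjc_real. Qed.

Lemma Wadj k m : op_adj (Wop k m) = Wop k m.
Proof.
apply: functional_extensionality => x; apply: functional_extensionality => y.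
rewrite /op_adj /Wop eq_sym; case: eqP => [->|_]; first by rewrite conj_real.
by rewrite (rmorph0 Num.conj).
Qed.

Lemma Wmul k m m' : op_mul (Wop k m) (Wop k m') =
  Wop k (fun j => m j * m' j * ('C(k, j))%:R).
Proof.
apply: functional_extensionality => x; apply: functional_extensionality => y.
rewrite /op_mul /Wop; case: eqP => [Exy|Nxy].
  rewrite -Exy.
  transitivity (\sum_(z : qubits k) if wt z == wt x then (m (wt x) * m' (wt x))%:C%C else 0).
    apply: eq_bigr => z _; rewrite [wt z == wt x]eq_sym.
    case: eqP => [<-|_]; by rewrite ?eqxx ?mul0r // rmorphM.
  by rewrite sum_wt mulr_natr raddfMn.
rewrite big1 // => z _; case: eqP => [E1|]; last by rewrite mul0r.
case: eqP => [E2|]; last by rewrite mulr0.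
by case: Nxy; rewrite E1 E2.
Qed.

Lemma Wtr k m : op_tr (Wop k m) = (\sum_(j < k.+1) ('C(k, j))%:R * m j)%:C%C.
Proof.
rewrite /op_tr /Wop rmorph_sum /= sum_split_wt; apply: eq_bigr => j _.
rewrite (eq_bigr (fun _ => (m j)%:C%C)); last by move=> x /eqP ->; rewrite eqxx.
by rewrite sumr_const -card_wt mulr_natl raddfMn.
Qed.

Lemma Wpsd k m : (forall j, 0 <= m j) -> op_psd (Wop k m).
Proof.
move=> Hm; split.
  move=> x y; rewrite /Wop eq_sym; case: eqP => [->|_]; first by rewrite conj_real.
  by rewrite (rmorph0 Num.conj).
move=> v.
have E : forall x, \sum_y Num.conj (v x) * Wop k m x y * v y =
   Num.conj (v x) * (m (wt x))%:C%C * \sum_(y | wt y == wt x) v y.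
  move=> x; rewrite mulr_sumr [RHS]big_mkcond /=; apply: eq_bigr => y _.
  rewrite /Wop eq_sym; case: eqP => _; by rewrite ?mulr0 ?mul0r ?mulrA.
under eq_bigr do rewrite E.
rewrite sum_split_wt sumr_ge0 // => j _.
rewrite (eq_bigr (fun x => Num.conj (v x) * ((m j)%:C%C * \sum_(y | wt y == j) v y)));
  last by move=> x /eqP ->; rewrite mulrA.
rewrite -mulr_suml -rmorph_sum mulrCA.
by rewrite mulr_ge0 ?ler0c // mulrC mul_conjC_ge0.
Qed.
End Ops.
Arguments Wop {R} k m _ _.

Section Entries.
Variable R : rcfType.
Local Notation C := R[i].

Lemma SS (c : nat) : ((Num.sqrt (c%:R : R))^-1)%:C%C * Num.conj (((Num.sqrt (c%:R : R))^-1)%:C%C)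
   = ((c%:R : R)^-1)%:C%C.
Proof.
rewrite conj_real -rmorphM /= -invfM -expr2 sqr_sqrtr //.
Qed.

Definition qf (b a k : nat) (j : nat) : R :=
  if (j <= a)%N then ('C(b + a - k, a - j))%:R / ('C(b + a, b))%:R else 0.

Definition hf (n1 n2 : R) (k : nat) (j : nat) : R := n1 ^+ (k - j) * n2 ^+ j.

Lemma gspinE (b a k : nat) (x y : qubits k) : (k <= b + a)%N ->
  gamma_spin R b a x y = Wop k (qf b a k) x y.
Proof.
move=> kN; rewrite /gamma_spin /marginal /proj /symvec /Wop /qf eqxx.
set S := ((Num.sqrt _)^-1)%:C%C.
transitivity (\sum_(z : qubits (b + a - k))
   if (wt x == wt y) && (wt x <= a)%N then
     (if wt z == (a - wt x)%N then ((('C(b + a, b))%:R : R)^-1)%:C%C else 0) else 0).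
  apply: eq_bigr => z _.
  change (#|[set i | glue x z i]|) with (wt (glue x z)).
  change (#|[set i | glue y z i]|) with (wt (glue y z)).
  rewrite !wt_glue // !andbT.
  case: eqP => H1; case: eqP => H2.
  - rewrite ifT; last by apply/andP; split; apply/eqP || apply/leP; lia.
    by rewrite ifT ?SS //; apply/eqP; lia.
  - rewrite (rmorph0 Num.conj) mulr0; case: ifP => // /andP [/eqP E _].
    by case: H2; rewrite -E.
  - rewrite mul0r; case: ifP => // /andP [/eqP E _]; case: ifP => // /eqP E2.
    by case: H1; lia.
  - rewrite mul0r; case: ifP => // /andP [/eqP E Le]; case: ifP => // /eqP E2.
    by case: H1; lia.
case H: ((wt x == wt y) && (wt x <= a)%N).
  by case/andP: H => -> ->; rewrite sum_wt mulrC mulr_natr raddfMn.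
rewrite big1 //; case: eqP H => //= _ ->; done.
Qed.

Lemma ginfE (n1 n2 : R) k (x y : qubits k) :
  gamma_inf n1 n2 x y = Wop k (hf n1 n2 k) x y.
Proof.
have Hx : (wt x < k.+1)%N by rewrite ltnS wt_le.
rewrite /gamma_inf (bigD1 (Ordinal Hx)) //= big1 ?addr0; last first.
  move=> j Hj; rewrite /proj /symvec.
  case: eqP => [E|_] /=; last by rewrite mul0r mulr0.
  by case/eqP: Hj; apply: val_inj.
rewrite /proj /symvec /Wop /hf eqxx /= subnK ?wt_le // eqxx /=.
rewrite [wt y == wt x]eq_sym.
case: eqP => E; last by rewrite (rmorph0 Num.conj) !mulr0.
rewrite -mulrA SS bin_sub ?wt_le // -rmorphM /=; congr (_ %:C)%C.
have H : ('C(k, wt x)%:R : R) != 0 by rewrite pnatr_eq0 -lt0n bin_gt0 wt_le.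
by field.
Qed.
End Entries.
Arguments qf {R} b a k j.
Arguments hf {R} n1 n2 k j.
Lemma binffact a b j k : (j <= a)%N -> (j <= k)%N -> (k <= a + b)%N ->
  ('C(a + b - k, a - j) * (a + b) ^_ k = 'C(a + b, a) * (a ^_ j * b ^_ (k - j)))%N.
Proof.
move=> ja jk kab; case: (leqP (k - j) b) => hb; last first.
  rewrite bin_small; last by lia.
  by rewrite (ffact_small hb) !muln0.
have h1 := bin_fact (_ : (a - j <= a + b - k)%N).
have e1 : (a + b - k - (a - j) = b - (k - j))%N by lia.
have {}h1 := h1 ltac:(lia); rewrite e1 in h1.
have h2 := ffact_fact kab.
have h3 := bin_fact (leq_addr b a); rewrite addKn in h3.
have h4 := ffact_fact ja.
have h5 := ffact_fact hb.
set fa := (a - j)`! in h1 h4; set fb := (b - (k - j))`! in h1 h5.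
set fc := (a + b - k)`! in h1 h2.
have Pp : (0 < fa * fb * fc)%N by rewrite !muln_gt0 !fact_gt0.
apply/eqP; rewrite -(eqn_pmul2r Pp); apply/eqP.
transitivity (('C(a + b - k, a - j) * (fa * fb)) * ((a + b) ^_ k * fc))%N; first by ring.
rewrite h1 h2; symmetry.
transitivity ('C(a + b, a) * ((a ^_ j * fa) * (b ^_ (k - j) * fb)) * fc)%N; first by ring.
rewrite h4 h5 h3; ring.
Qed.

Section Anal.
Variable R : rcfType.

Lemma natr_ffact n m : ((n ^_ m)%:R : R) = \prod_(i < m) ((n - i)%N)%:R.
Proof. by rewrite ffact_prod natr_prod. Qed.

Lemma prod_split (F : nat -> R) j k : (j <= k)%N ->
  \prod_(i < k) F i = \prod_(i < j) F i * \prod_(i < k - j) F (j + i)%N.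
Proof.
move=> jk; rewrite -(big_mkord xpredT F) -(big_mkord xpredT F) -(big_mkord xpredT (fun i => F (j + i)%N)).
rewrite (big_cat_nat (leq0n j) jk) /=; congr (_ * _).
have := big_addn 0 k j (fun _ => true) F; rewrite add0n => ->.
by apply: eq_bigr => i _; rewrite addnC.
Qed.

Lemma qprod (b a k j : nat) : (j <= a)%N -> (j <= k)%N -> (k <= b + a)%N ->
  (('C(b + a - k, a - j))%:R / ('C(b + a, b))%:R : R) =
  (\prod_(i < j) (((a - i)%N)%:R / ((b + a - i)%N)%:R)) *
  (\prod_(i < k - j) (((b - i)%N)%:R / ((b + a - (j + i))%N)%:R)).
Proof.
move=> ja jk kab.
have H := @binffact a b j k ja jk ltac:(by rewrite addnC).
rewrite [(a + b)%N]addnC in H.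
have Cb : 'C(b + a, b) = 'C(b + a, a).
  by rewrite -[in RHS](bin_sub (leq_addl b a)) addnK.
rewrite Cb !prodf_div.
have nzC : ('C(b + a, a)%:R : R) != 0 by rewrite pnatr_eq0 -lt0n bin_gt0 leq_addl.
have nzF : (((b + a) ^_ k)%:R : R) != 0 by rewrite pnatr_eq0 -lt0n ffact_gt0.
have HR := congr1 (fun n => (n%:R : R)) H; rewrite /= !natrM in HR.
rewrite -(natr_ffact a j) -(natr_ffact b (k - j)) mulf_div.
have -> : \prod_(i < j) ((b + a - i)%N)%:R * \prod_(i < k - j) ((b + a - (j + i))%N)%:R
    = (((b + a) ^_ k)%:R : R).
  by rewrite natr_ffact (prod_split (fun i => ((b + a - i)%N)%:R) _ _ jk).
apply/eqP; rewrite eqr_div // -natrM; apply/eqP.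
by rewrite natrM HR mulrC.
Qed.

Lemma prod01 n (f : nat -> R) : (forall i, (i < n)%N -> 0 <= f i <= 1) ->
  0 <= \prod_(i < n) f i <= 1.
Proof.
elim: n => [|n IH] H; first by rewrite big_ord0 ler01 lexx.
rewrite big_ord_recr /=.
have /andP [h1 h2] := IH (fun i hi => H i (ltnW hi)).
have /andP [h3 h4] := H n (ltnSn n).
apply/andP; split; first exact: mulr_ge0.
by rewrite mulr_ile1.
Qed.

Lemma prod_diff n (f g : nat -> R) :
  (forall i, (i < n)%N -> 0 <= f i <= 1) -> (forall i, (i < n)%N -> 0 <= g i <= 1) ->
  `|\prod_(i < n) f i - \prod_(i < n) g i| <= \sum_(i < n) `|f i - g i|.
Proof.
elim: n => [|n IH] Hf Hg; first by rewrite !big_ord0 subrr normr0.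
rewrite !big_ord_recr /=.
have IH' := IH (fun i hi => Hf i (ltnW hi)) (fun i hi => Hg i (ltnW hi)).
have /andP [q0 q1] := prod01 n g (fun i hi => Hg i (ltnW hi)).
have /andP [f0 f1] := Hf n (ltnSn n).
set P := \prod_(i < n) f i; set Q := \prod_(i < n) g i.
have -> : P * f n - Q * g n = (P - Q) * f n + Q * (f n - g n) by ring.
apply: (le_trans (ler_normD _ _)); apply: lerD.
  rewrite normrM; apply: (le_trans _ IH').
  by rewrite ler_piMr // ger0_norm.
rewrite normrM ger0_norm //; apply: ler_piMl => //.
Qed.

Lemma frac01 (u v : nat) : (u <= v)%N -> (0 < v)%N -> 0 <= (u%:R : R) / v%:R <= 1.
Proof.
move=> uv v0; apply/andP; split; first by rewrite divr_ge0.
by rewrite ler_pdivrMr ?ltr0n // mul1r ler_nat.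
Qed.

Lemma n_small (a k N : nat) (n K : R) : (a < k)%N -> (0 < N)%N -> 0 <= K ->
  `|a%:R / N%:R - n| <= K / N%:R -> n <= (K + k%:R) * (k.+1)%:R / N%:R.
Proof.
move=> ak N0 K0 H.
have t0 : 0 < (N%:R : R) by rewrite ltr0n.
move: H; rewrite ler_norml => /andP [h1 _].
have h2 : (a%:R : R) / N%:R <= k%:R / N%:R.
  by rewrite ler_pM2r ?invr_gt0 // ler_nat ltnW.
have h3 : (K + k%:R) / N%:R <= (K + k%:R) * (k.+1)%:R / N%:R.
  rewrite mulrAC ler_peMr //; last by rewrite ler1n.
  by rewrite divr_ge0 // addr_ge0.
have e : (K + k%:R) / N%:R = K / N%:R + k%:R / N%:R by rewrite mulrDl.
lra.
Qed.

Lemma factor_bound (a i l N k : nat) (n K : R) : (i <= l)%N -> (l < k)%N -> (k < N)%N ->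
  0 <= n -> n <= 1 -> 0 <= K -> `|a%:R / N%:R - n| <= K / N%:R ->
  `|((a - i)%N)%:R / ((N - l)%N)%:R - n| <= (K + k%:R) * (k.+1)%:R / N%:R.
Proof.
move=> il lk kN n0 n1 K0 H.
have N0 : (0 < N)%N by lia.
have t0 : 0 < (N%:R : R) by rewrite ltr0n.
case: (leqP i a) => ia; last first.
  rewrite (_ : (a - i)%N = 0%N); last by lia.
  rewrite mul0r sub0r normrN ger0_norm //.
  by apply: (n_small a k N) => //; lia.
have M0 : 0 < (((N - l)%N)%:R : R) by rewrite ltr0n; lia.
have lN : (l <= N)%N by lia.
rewrite natrB // in M0; rewrite natrB // natrB //.
set t := (N%:R : R) in t0 H M0 *.
have hK : `|a%:R - n * t| <= K.
  have -> : a%:R - n * t = t * (a%:R / t - n) by field; rewrite gt_eqF.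
  rewrite normrM (ger0_norm (ltW t0)).
  apply: (le_trans (ler_wpM2l (ltW t0) H)).
  by rewrite mulrC divfK // gt_eqF.
have hl : `|n * l%:R - i%:R| <= k%:R.
  have e1 : n * l%:R <= l%:R by rewrite ler_piMl.
  have e2 : 0 <= n * l%:R by rewrite mulr_ge0.
  have e3 : (i%:R : R) <= l%:R by rewrite ler_nat.
  have e4 : (l%:R : R) <= k%:R by rewrite ler_nat ltnW.
  have e5 : (0 : R) <= i%:R by rewrite ler0n.
  rewrite ler_norml; apply/andP; split; lra.
have e : (a%:R - i%:R) / (t - l%:R) - n = ((a%:R - n * t) + (n * l%:R - i%:R)) / (t - l%:R).
  by field; rewrite gt_eqF.
rewrite e normrM normfV (ger0_norm (ltW M0)).
have hMt : (t - l%:R)^-1 <= (k.+1)%:R / t.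
  rewrite ler_pdivlMr // mulrC ler_pdivrMr // .
  have : (N <= k.+1 * (N - l))%N by nia.
  rewrite -(ler_nat R) natrM natrB ?(ltnW (leq_ltn_trans il (ltn_trans lk kN))) //.
have hnum : `|a%:R - n * t + (n * l%:R - i%:R)| <= K + k%:R.
  by apply: (le_trans (ler_normD _ _)); apply: lerD.
have Mi : 0 <= (t - l%:R)^-1 by rewrite invr_ge0 ltW.
apply: (le_trans (ler_wpM2r Mi hnum)).
rewrite -mulrA; apply: ler_wpM2l; first by apply: addr_ge0.
exact: hMt.
Qed.
End Anal.

Section Terms.
Variable R : rcfType.

Lemma qf_prod (b a k j : nat) : (j <= a)%N -> (j <= k)%N -> (k <= b + a)%N ->
  qf (R:=R) b a k j =
  (\prod_(i < j) (((a - i)%N)%:R / ((b + a - i)%N)%:R)) *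
  (\prod_(i < k - j) (((b - i)%N)%:R / ((b + a - (j + i))%N)%:R)).
Proof. by move=> ja jk kN; rewrite /qf ja qprod. Qed.

Lemma qf_factors (b a k j : nat) : (j <= a)%N -> (j <= k)%N -> (k <= b + a)%N ->
  (forall i, (i < j)%N -> 0 <= (((a - i)%N)%:R / ((b + a - i)%N)%:R : R) <= 1) /\
  (forall i, (i < k - j)%N -> 0 <= (((b - i)%N)%:R / ((b + a - (j + i))%N)%:R : R) <= 1).
Proof.
move=> ja jk kN; split => i hi; apply: frac01; lia.
Qed.

Lemma qf01 (b a k j : nat) : (j <= k)%N -> (k <= b + a)%N -> 0 <= qf (R:=R) b a k j <= 1.
Proof.
move=> jk kN; case: (leqP j a) => ja; last by rewrite /qf leqNgt ja lexx ler01.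
have [h1 h2] := qf_factors b a k j ja jk kN.
rewrite qf_prod //.
have /andP [p1 p2] := prod01 R _ _ h1; have /andP [p3 p4] := prod01 R _ _ h2.
by rewrite mulr_ge0 // mulr_ile1.
Qed.

Lemma hf01 (n1 n2 : R) k j : 0 <= n1 <= 1 -> 0 <= n2 <= 1 -> 0 <= hf n1 n2 k j <= 1.
Proof.
move=> /andP [a1 b1] /andP [a2 b2]; rewrite /hf.
by rewrite mulr_ge0 ?exprn_ge0 // mulr_ile1 ?exprn_ge0 ?exprn_ile1.
Qed.

Lemma term_small (b a k j : nat) (n1 n2 : R) : 0 <= n1 <= 1 -> 0 <= n2 <= 1 ->
  (j <= k)%N -> (k <= b + a)%N -> `|qf b a k j - hf n1 n2 k j| <= 2.
Proof.
move=> h1 h2 jk kN.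
have /andP [q0 q1] := qf01 b a k j jk kN; have /andP [r0 r1] := hf01 n1 n2 k j h1 h2.
rewrite ler_norml; apply/andP; split; lra.
Qed.

Lemma diff2 (x y u v : R) : `|y| <= 1 -> `|u| <= 1 ->
  `|x * y - u * v| <= `|x - u| + `|y - v|.
Proof.
move=> hy hu.
have -> : x * y - u * v = (x - u) * y + u * (y - v) by ring.
apply: (le_trans (ler_normD _ _)); apply: lerD; rewrite normrM.
  by rewrite ler_piMr.
by rewrite ler_piMl.
Qed.

Lemma term_big (b a k j : nat) (n1 n2 K : R) : 0 <= n1 <= 1 -> 0 <= n2 <= 1 -> 0 <= K ->
  (j <= k)%N -> (k < b + a)%N ->
  `|a%:R / (b + a)%:R - n2| <= K / (b + a)%:R ->
  `|b%:R / (b + a)%:R - n1| <= K / (b + a)%:R ->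
  `|qf b a k j - hf n1 n2 k j| <= (k.+1)%:R * ((K + k%:R) * (k.+1)%:R / (b + a)%:R).
Proof.
move=> /andP [a1 b1] /andP [a2 b2] K0 jk kN Ha Hb.
set F := (K + k%:R) * (k.+1)%:R / (b + a)%:R.
have F0 : 0 <= F by rewrite divr_ge0 // mulr_ge0 // addr_ge0.
case: (leqP j a) => ja; last first.
  rewrite /qf leqNgt ja /= sub0r normrN ger0_norm; last by rewrite /hf mulr_ge0 ?exprn_ge0.
  have hn : n2 <= F by apply: (n_small R a k (b + a)) => //; lia.
  have : hf n1 n2 k j <= n2.
    rewrite /hf; case: j ja jk => [|j] // ja jk.
    rewrite exprS mulrCA; apply: ler_piMr => //.
    by rewrite mulr_ile1 ?exprn_ge0 ?exprn_ile1.
  move=> hh; apply: (le_trans hh); apply: (le_trans hn).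
  by rewrite ler_peMl // ler1n.
have kN' : (k <= b + a)%N by lia.
have [h1 h2] := qf_factors b a k j ja jk kN'.
rewrite qf_prod // /hf mulrC.
have e1 : n2 ^+ j = \prod_(i < j) n2 by rewrite prodr_const card_ord.
have e2 : n1 ^+ (k - j) = \prod_(i < k - j) n1 by rewrite prodr_const card_ord.
rewrite e1 e2.
have c1 : forall i, (i < j)%N -> 0 <= n2 <= 1 by move=> *; rewrite a2 b2.
have c2 : forall i, (i < k - j)%N -> 0 <= n1 <= 1 by move=> *; rewrite a1 b1.
apply: (le_trans (diff2 _ _ _ _ _ _)).
- have /andP [p1 p2] := prod01 R _ _ h1; by rewrite ger0_norm.
- have /andP [p1 p2] := prod01 R _ (fun _ => n1) c2; by rewrite ger0_norm.
apply: (le_trans (lerD (prod_diff R _ _ (fun _ => n1) h2 c2) (prod_diff R _ _ (fun _ => n2) h1 c1))).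
have s1 : \sum_(i < j) `|((a - i)%N)%:R / ((b + a - i)%N)%:R - n2| <= j%:R * F.
  have -> : j%:R * F = \sum_(i < j) F by rewrite sumr_const card_ord mulr_natl.
  apply: ler_sum => i _.
  move: (ltn_ord i) => hi; apply: (factor_bound R a i i (b + a) k) => //; lia.
have s2 : \sum_(i < k - j) `|((b - i)%N)%:R / ((b + a - (j + i))%N)%:R - n1| <= (k - j)%:R * F.
  have -> : (k - j)%:R * F = \sum_(i < k - j) F by rewrite sumr_const card_ord mulr_natl.
  apply: ler_sum => i _.
  move: (ltn_ord i) => hi; apply: (factor_bound R b i (j + i) (b + a) k) => //; lia.
apply: (le_trans (lerD s2 s1)).
rewrite -mulrDl -natrD subnK //.
by rewrite ler_wpM2r // ler_nat.
Qed.
End Terms.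

Section Final.
Variable R : rcfType.

Lemma final_bound (n1 n2 K : R) (b a k N0 : nat) : 0 <= n1 <= 1 -> 0 <= n2 <= 1 -> 0 <= K ->
  (k < b + a)%N ->
  ((N0 <= b + a)%N -> `|a%:R / (b + a)%:R - n2| <= K / (b + a)%:R /\
                      `|b%:R / (b + a)%:R - n1| <= K / (b + a)%:R) ->
  \sum_(j < k.+1) ('C(k, j))%:R * `|qf b a k j - hf n1 n2 k j| <=
  ((\sum_(j < k.+1) ('C(k, j))%:R) * (2 * N0%:R + (k.+1)%:R * ((K + k%:R) * (k.+1)%:R)) + 1)
    / (b + a)%:R.
Proof.
move=> h1 h2 K0 kN H.
set t := ((b + a)%:R : R).
have t0 : 0 < t by rewrite ltr0n; lia.
set S := \sum_(j < k.+1) ('C(k, j))%:R.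
have S0 : 0 <= S by rewrite sumr_ge0.
set F0 := (K + k%:R) * (k.+1)%:R.
have F00 : 0 <= F0 by rewrite mulr_ge0 // addr_ge0.
have e : (S * (2 * N0%:R + (k.+1)%:R * F0) + 1) / t =
   S * (2 * (N0%:R / t)) + S * ((k.+1)%:R * (F0 / t)) + t^-1.
  by ring.
rewrite e.
have p1 : 0 <= S * (2 * (N0%:R / t)) by rewrite !mulr_ge0 // ?invr_ge0 ?(ltW t0).
have p2 : 0 <= S * ((k.+1)%:R * (F0 / t)).
  by apply: mulr_ge0 => //; apply: mulr_ge0 => //; apply: divr_ge0 => //; exact: ltW.
have p3 : 0 <= t^-1 by rewrite invr_ge0 (ltW t0).
case: (leqP N0 (b + a)) => hN0.
  have [Ha Hb] := H hN0.
  have : \sum_(j < k.+1) ('C(k, j))%:R * `|qf b a k j - hf n1 n2 k j| <=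
         \sum_(j < k.+1) ('C(k, j))%:R * ((k.+1)%:R * (F0 / t)).
    apply: ler_sum => j _; apply: ler_wpM2l => //.
    rewrite /F0.
    apply: (term_big R b a k j n1 n2 K) => //; by rewrite -ltnS.
  rewrite -mulr_suml -/S => hs; apply: (le_trans hs).
  by rewrite addrAC; apply: ler_wpDl => //; exact: addr_ge0.
have : \sum_(j < k.+1) ('C(k, j))%:R * `|qf b a k j - hf n1 n2 k j| <=
       \sum_(j < k.+1) ('C(k, j))%:R * 2.
  apply: ler_sum => j _; apply: ler_wpM2l => //.
  apply: (term_small R b a k j n1 n2 h1 h2); [by rewrite -ltnS | exact: ltnW].
rewrite -mulr_suml -/S => hs.
have q : 1 <= N0%:R / t by rewrite ler_pdivlMr // mul1r ler_nat; exact: ltnW.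
have q2 : S * 2 <= S * (2 * (N0%:R / t)).
  by apply: ler_wpM2l => //; rewrite ler_peMr.
apply: (le_trans hs); apply: (le_trans q2).
by rewrite -addrA; apply: ler_wpDr => //; exact: addr_ge0.
Qed.
End Final.

Theorem mainTheorem4 (R : rcfType) (n1 n2 : R) (N1 N2 : nat -> nat) :
  0 < n1 < 1 -> 0 < n2 < 1 -> n1 + n2 = 1 ->
  (forall N : nat, (2 <= N)%N -> (N1 N + N2 N)%N = N) ->
  (exists (K : R) (N0 : nat), forall N : nat, (N0 <= N)%N ->
      `|(N1 N)%:R / N%:R - n1| <= K / N%:R /\
      `|(N2 N)%:R / N%:R - n2| <= K / N%:R) ->
  forall k : nat, exists c : R, 0 < c /\
    forall N : nat, (2 <= N)%N -> (k < N)%N ->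
      exists B : Op R (qubits k),
        is_abs (op_sub (@gamma_spin R (N1 N) (N2 N) k) (@gamma_inf R n1 n2 k)) B /\
        op_tr B <= (c / N%:R)%:C%C.
Proof.
move=> /andP [n1p n1l] /andP [n2p n2l] hsum HN [K0 [N0 HK]] k.
have h1 : 0 <= n1 <= 1 by rewrite !ltW.
have h2 : 0 <= n2 <= 1 by rewrite !ltW.
set K := `|K0|.
have K0p : 0 <= K by exact: normr_ge0.
set S := \sum_(j < k.+1) (('C(k, j))%:R : R).
have S0 : 0 <= S by apply: sumr_ge0 => *; exact: ler0n.
exists (S * (2 * N0%:R + (k.+1)%:R * ((K + k%:R) * (k.+1)%:R)) + 1).
split.
  apply: ltr_wpDl; last exact: ltr01.
  apply: mulr_ge0 => //; apply: addr_ge0; first by apply: mulr_ge0.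
  by apply: mulr_ge0 => //; apply: mulr_ge0 => //; apply: addr_ge0.
move=> N h2N kN.
have hN := HN N h2N.
have kN' : (k < N1 N + N2 N)%N by rewrite hN.
pose d := fun j => qf (N1 N) (N2 N) k j - hf n1 n2 k j.
have Aeq : op_sub (@gamma_spin R (N1 N) (N2 N) k) (@gamma_inf R n1 n2 k) = Wop k d.
  apply: functional_extensionality => x; apply: functional_extensionality => y.
  rewrite /op_sub (@gspinE R (N1 N) (N2 N) k x y (ltnW kN')) (@ginfE R n1 n2 k x y) /Wop /d.
  by case: eqP => _; [rewrite raddfB | rewrite subr0].
exists (Wop k (fun j => `|d j|)).
split; first split.
- by apply: Wpsd => j; exact: normr_ge0.
- rewrite Aeq Wadj !Wmul; congr Wop.
  apply: functional_extensionality => j.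
  by rewrite -!expr2 real_normK // num_real.
rewrite Wtr lecR.
have Hb : (N0 <= N1 N + N2 N)%N ->
   `|(N2 N)%:R / (N1 N + N2 N)%:R - n2| <= K / (N1 N + N2 N)%:R /\
   `|(N1 N)%:R / (N1 N + N2 N)%:R - n1| <= K / (N1 N + N2 N)%:R.
  rewrite hN => hN0; have [u v] := HK N hN0.
  have w : K0 / N%:R <= K / N%:R.
    by rewrite ler_pM2r ?invr_gt0 ?ltr0n ?ler_norm //; lia.
  split; [exact: le_trans v w | exact: le_trans u w].
have := final_bound R n1 n2 K (N1 N) (N2 N) k N0 h1 h2 K0p kN' Hb.
by rewrite hN.
Qed.
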